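(* Let $\vec{\mathcal U},\vec{\mathcal V},\vec{\mathcal W}\in\Upsilon$ and suppose $\vec{\mathcal V}$ is not empty. Then $(\vec{\mathcal U}*\vec{\mathcal V})*\vec{\mathcal W}=\vec{\mathcal U}*(\vec{\mathcal V}*\vec{\mathcal W})$.
   Context: $W$ is a finite set (the propositional worlds of a propositional language over finitely many variables). Consider finite sequences $\vec{\mathcal U}=(\mathcal U_0,\ldots,\mathcal U_k)$ ($k\ge0$) of mutually disjoint subsets of $W$ (components may be empty, possibly repeatedly). $\vec{\mathcal U}$ is full iff $\bigcup_i\mathcal U_i=W$, empty iff $\bigcup_i\mathcal U_i=\emptyset$; $\Upsilon$ is the set of such sequences which are full or empty. Sequence revision $*:\Upsilon\times\Upsilon\to\Upsilon$: for $\vec{\mathcal U}=(\mathcal U_0,\ldots,\mathcal U_k)$ and $\vec{\mathcal V}=(\mathcal V_0,\ldots,\mathcal V_m)$, if $\vec{\mathcal U}$ is full then $\vec{\mathcal U}*\vec{\mathcal V}$ is the sequence $(\mathcal U_0\cap\mathcal V_0,\ldots,\mathcal U_k\cap\mathcal V_0,\ \mathcal U_0\cap\mathcal V_1,\ldots,\mathcal U_k\cap\mathcal V_1,\ \ldots,\ \mathcal U_0\cap\mathcal V_m,\ldots,\mathcal U_k\cap\mathcal V_m)$ (of length $(k+1)(m+1)$); otherwise $\vec{\mathcal U}*\vec{\mathcal V}=\vec{\mathcal V}$. Equality of sequences means equality as finite sequences. *)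

(* Defs.v *)
From mathcomp Require Import all_boot.
Set Implicit Arguments. Unset Strict Implicit. Unset Printing Implicit Defensive.

Definition nonempty_seq (T : Type) (s : seq T) : Prop := (0 < size s)%N.

(* Components are mutually disjoint: distinct positions give disjoint sets
   (empty components may repeat). *)
Definition mut_disjoint (W : finType) (s : seq {set W}) : Prop :=
  forall i j, (i < size s)%N -> (j < size s)%N -> i <> j ->
    nth set0 s i :&: nth set0 s j = set0.

Definition seq_union (W : finType) (s : seq {set W}) : {set W} :=
  \bigcup_(A <- s) A.

Definition full (W : finType) (s : seq {set W}) : bool := seq_union s == setT.
Definition empty_seq (W : finType) (s : seq {set W}) : bool := seq_union s == set0.

Definition in_Upsilon (W : finType) (s : seq {set W}) : Prop :=
  [/\ nonempty_seq s, mut_disjoint s & (full s || empty_seq s)].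

Definition srev (W : finType) (U V : seq {set W}) : seq {set W} :=
  if full U then flatten [seq [seq A :&: B | A <- U] | B <- V] else V.

(* Main.v *)
Require Import Defs.
From mathcomp Require Import all_boot.

Lemma union_inter (W : finType) (U : seq {set W}) B :
  seq_union [seq A :&: B | A <- U] = seq_union U :&: B.
Proof.
elim: U => [|A U IH] /=; first by rewrite /seq_union !big_nil set0I.
by rewrite /seq_union !big_cons -/(seq_union _) IH -/(seq_union U) setIUl.
Qed.

Lemma union_rev (W : finType) (U V : seq {set W}) :
  seq_union (flatten [seq [seq A :&: B | A <- U] | B <- V]) =
  seq_union U :&: seq_union V.
Proof.
elim: V => [|B V IH] /=; first by rewrite /seq_union !big_nil setI0.
rewrite /seq_union big_cat /=. rewrite -!/(seq_union _). rewrite IH union_inter /seq_union big_cons.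
by rewrite -/(seq_union V) setIUr.
Qed.

Theorem proposition6 (W : finType) (U V X : seq {set W}) :
  in_Upsilon U -> in_Upsilon V -> in_Upsilon X -> ~~ empty_seq V ->
  srev (srev U V) X = srev U (srev V X).
Proof.
move=> _ [_ _ hV] _ hne.
have fV : full V by move: hV hne; case: (full V) => //= ->.
rewrite /srev fV.
case fU: (full U); last first.
  by rewrite fV.
have fUV : full (flatten [seq [seq A :&: B | A <- U] | B <- V]).
  by rewrite /full union_rev (eqP fU) setTI.
rewrite fUV.
elim: X => [|C X IH] //=.
rewrite map_cat flatten_cat IH; congr (_ ++ _).
elim: V {fV hV hne fUV IH} => [|B V IHV] //=.
rewrite map_cat IHV -map_comp; congr (_ ++ _).
by apply: eq_map => A /=; rewrite setIA.
Qed.
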